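(* Let $(n_1,\dots,n_k)$, $k\ge3$, be an admissible $k$-tuple of positive integers with $[n_1,\dots,n_k]=0$, and suppose there is exactly one index $j\in\{1,\dots,k\}$ with $n_j=1$. Then there are coprime integers $m$ and $n$ such that $[n_1,\dots,n_{j-1},2,n_{j+1},\dots,n_k]=\frac{m^2}{mn+1}$.
   Context: $[c_1,\dots,c_k]=c_1-\cfrac{1}{c_2-\cfrac{1}{\ddots-\cfrac1{c_k}}}$. A $k$-tuple of non-negative integers $(n_1,\dots,n_k)$ is admissible if every denominator appearing in $[n_1,\dots,n_k]$ is positive, i.e. $[n_j,\dots,n_k]>0$ for $j=2,\dots,k$. *)

(* Defs.v *)
From mathcomp Require Import all_boot all_order all_algebra.
Set Implicit Arguments. Unset Strict Implicit. Unset Printing Implicit Defensive.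
Import Order.TTheory GRing.Theory Num.Theory.
Local Open Scope ring_scope.

(* [c_1, ..., c_k] = c_1 - 1/[c_2, ..., c_k];  [c] = c.  (The empty list is
   given the value 0; it never occurs below.) *)
Fixpoint cfrac (s : seq nat) : rat :=
  match s with
  | [::] => 0
  | [:: c] => c%:R
  | c :: t => c%:R - (cfrac t)^-1
  end.

(* admissible: [n_j, ..., n_k] > 0 for j = 2, ..., k
   (0-based: drop j s for 1 <= j < size s). *)
Definition admissible (s : seq nat) : Prop :=
  forall j : nat, (1 <= j < size s)%N -> 0 < cfrac (drop j s).

(* Main.v *)
Require Import Defs.
From mathcomp Require Import all_boot all_order all_algebra.
From mathcomp Require Import ring lra zify.
Import Order.TTheory GRing.Theory Num.Theory.
Local Open Scope ring_scope.

Fixpoint FF (s : seq nat) (v : int * int) : int * int :=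
  match s with
  | [::] => v
  | c :: t => let w := FF t v in (c%:Z * w.1 - w.2, w.1)
  end.

Definition ff s := FF s (1, 0).
Definition gg s := FF s (0, 1).

Lemma FF_cat s t v : FF (s ++ t) v = FF s (FF t v).
Proof. by elim: s => //= c s ->. Qed.

Lemma FF_lin s x y : FF s (x, y) =
  (x * (ff s).1 + y * (gg s).1, x * (ff s).2 + y * (gg s).2).
Proof.
rewrite /ff /gg; elim: s => [|c s IH] /=; first by congr pair; ring.
rewrite IH /=; congr pair; ring.
Qed.

Lemma det_ff s : (ff s).1 * (gg s).2 - (gg s).1 * (ff s).2 = 1.
Proof.
rewrite /ff /gg; elim: s => [|c s IH] /=; first by rewrite mulr1 mulr0 subr0.
rewrite -[RHS]IH; ring.
Qed.

Lemma pos_mul1 (u v : int) : - (u * v) = 1 -> 0 < v -> v = 1.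
Proof.
case: v => [n|n] h1 h2 //.
have /eqP : (- u) * n = 1 by rewrite mulNr.
by rewrite intUnitRing.mulzn_eq1 => /andP [_ /eqP ->].
Qed.

Lemma cfrac_cons c t : t != [::] -> cfrac (c :: t) = c%:R - (cfrac t)^-1.
Proof. by case: t. Qed.

Lemma shiftH {T : Type} {x : T} {t : seq T} {i} :
  (1 <= i < size t)%N -> (1 <= i.+1 < size (x :: t))%N.
Proof. by case/andP => _ h; rewrite /= ltnS h. Qed.

Lemma cfrac_link s : s != [::] ->
  (forall i, (1 <= i < size s)%N -> 0 < cfrac (drop i s)) ->
  0 < (ff s).2 /\ cfrac s = (ff s).1%:~R / (ff s).2%:~R.
Proof.
elim: s => [//|c t IH] _ H.
case: t IH H => [|d t] IH H.
  rewrite /ff /=; split => //; rewrite mulr1 subr0 divr1 //.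
have Ht : d :: t != [::] by [].
have [q0 E] := IH Ht (fun i Hi => H i.+1 (shiftH Hi)).
have c0 : 0 < cfrac (d :: t) by apply: (H 1%N).
have -> : ff (c :: d :: t) = (c%:Z * (ff (d :: t)).1 - (ff (d :: t)).2, (ff (d :: t)).1) by [].
set p := (ff (d :: t)).1 in E *; set q := (ff (d :: t)).2 in q0 E *.
clearbody p q.
have p0 : 0 < p.
  rewrite -(@ltr0z rat).
  have : 0 < cfrac (d :: t) * q%:~R by rewrite mulr_gt0 // ltr0z.
  by rewrite E mulfVK // intr_eq0 gt_eqF.
split; first by [].
rewrite cfrac_cons // E invf_div /= intrB intrM.
have pn : (p%:~R : rat) != 0 by rewrite intr_eq0 gt_eqF.
have -> : ((c%:Z)%:~R : rat) = c%:R by [].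
by field.
Qed.

Lemma drop_cat_le (A t : seq nat) i : (i <= size A)%N -> drop i (A ++ t) = drop i A ++ t.
Proof.
elim: A i => [|a A IH] i Hi; first by case: i Hi => //= _; rewrite drop0.
case: i Hi => [|i] Hi //=.
by rewrite IH.
Qed.

Lemma mono_head A B :
  (forall i, (1 <= i < size (A ++ 1%N :: B))%N -> 0 < cfrac (drop i (A ++ 1%N :: B))) ->
  cfrac (A ++ 1%N :: B) <= cfrac (A ++ 2%N :: B).
Proof.
elim: A => [|c A IH] H.
  case: B H => [|b B] H /=; first by rewrite ler_nat.
  by rewrite lerD2r ler_nat.
have ne1 : A ++ 1%N :: B != [::] by case: A {IH H}.
have ne2 : A ++ 2%N :: B != [::] by case: A {IH H ne1}.
rewrite cat_cons (cfrac_cons _ _ ne1) (cfrac_cons _ _ ne2) lerD2l lerN2.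
have p1 : 0 < cfrac (A ++ 1%N :: B).
  have hh : (1 <= 1 < size ((c :: A) ++ 1%N :: B))%N.
    by rewrite /= size_cat /= addnS.
  by have := H 1%N hh; rewrite /= drop0.
have h := IH (fun i Hi => H i.+1 (shiftH Hi)).
rewrite lef_pV2 //; rewrite posrE //; exact: lt_le_trans h.
Qed.

Lemma set_nth_mid (A B : seq nat) y z :
  set_nth 0%N (A ++ y :: B) (size A) z = A ++ z :: B.
Proof. by elim: A => //= a A ->. Qed.

Theorem lemma2p4 (s : seq nat) (j : nat) :
  (3 <= size s)%N ->
  all (fun c => 0 < c)%N s ->
  admissible s ->
  cfrac s = 0 ->
  (j < size s)%N ->
  nth 0%N s j = 1%N ->
  (forall i : nat, (i < size s)%N -> nth 0%N s i = 1%N -> i = j) ->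
  exists m n : int,
    coprimez m n /\ m * n + 1 != 0 /\
    cfrac (set_nth 0%N s j 2%N) = (m ^+ 2)%:~R / (m * n + 1)%:~R.
Proof.
move=> _ _ Hadm H0 Hj Hnth _.
set A := take j s; set B := drop j.+1 s.
have Es : s = A ++ 1%N :: B by rewrite -Hnth -drop_nth // cat_take_drop.
have HA : size A = j by rewrite size_take Hj.
have Es' : set_nth 0%N s j 2%N = A ++ 2%N :: B by rewrite Es -HA set_nth_mid.
rewrite Es'.
have sne : s != [::] by case: s Hj {Es Es' A B HA Hadm H0 Hnth}.
have [q0 E] := cfrac_link _ sne Hadm.
have d := det_ff s.
have p0 : (ff s).1 = 0.
  move: E; rewrite H0 => /esym /eqP; rewrite mulf_eq0 invr_eq0 !intr_eq0.
  by rewrite (gt_eqF q0) orbF => /eqP.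
have q1 : (ff s).2 = 1.
  rewrite p0 mul0r sub0r in d.
  exact: pos_mul1 d q0.
set x := (ff B).1; set z := (ff B).2.
set a := (ff A).1; set b := (ff A).2; set a2 := (gg A).1; set b2 := (gg A).2.
have dA : a * b2 - a2 * b = 1 by apply: det_ff.
have fs : ff s = FF A (1%:Z * x - z, x) by rewrite /ff Es FF_cat.
have fs' : ff (A ++ 2%N :: B) = FF A (2%:Z * x - z, x) by rewrite /ff FF_cat.
rewrite FF_lin in fs; rewrite FF_lin in fs'.
have e1 := congr1 fst fs; have e2 := congr1 snd fs.
rewrite /= p0 in e1; rewrite /= q1 in e2.
have xa : x = a.
  have H : x * (a * b2 - a2 * b) =
     a * ((1%:Z * x - z) * b + x * b2) - b * ((1%:Z * x - z) * a + x * a2) by ring.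
  by rewrite dA mulr1 -e1 -e2 mulr1 mulr0 subr0 in H.
have f1 : (ff (A ++ 2%N :: B)).1 = a * a.
  rewrite fs' /=; have -> : (2%:Z * x - z) * a + x * a2 = x * a + ((1%:Z * x - z) * a + x * a2) by ring.
  by rewrite -e1 addr0 xa.
have f2 : (ff (A ++ 2%N :: B)).2 = a * b + 1.
  rewrite fs' /=; have -> : (2%:Z * x - z) * b + x * b2 = x * b + ((1%:Z * x - z) * b + x * b2) by ring.
  by rewrite -e2 xa.
have adm' : forall i, (1 <= i < size (A ++ 2%N :: B))%N -> 0 < cfrac (drop i (A ++ 2%N :: B)).
  move=> i /andP [i1 i2].
  have i2' : (i < size s)%N by rewrite Es !size_cat /= in i2 *.
  have hs := Hadm i (introT andP (conj i1 i2')).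
  case: (leqP i (size A)) => iA.
    rewrite drop_cat_le //; rewrite Es drop_cat_le // in hs.
    apply: (lt_le_trans hs); apply: mono_head => i' /andP [i'1 i'2].
    rewrite -drop_cat_le // drop_drop -Es.
    apply: Hadm; rewrite addn_gt0 i'1 /=.
    move: i'2; rewrite size_cat size_drop Es size_cat /=.
    lia.
  rewrite Es !drop_cat ltnNge (ltnW iA) /= in hs *.
  move: hs; have -> : (i - size A)%N = (i - size A).-1.+1 by rewrite prednK // subn_gt0.
  by [].
have sne' : A ++ 2%N :: B != [::] by case: A {Es Es' HA fs fs' f1 f2 adm' a b a2 b2 dA e1 e2 xa}.
have [q0' E'] := cfrac_link _ sne' adm'.
exists a, b; split.
  apply/coprimezP; exists (b2, - a2) => /=; rewrite -dA; ring.
split; first by rewrite -f2 gt_eqF.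
by rewrite E' f1 f2 expr2.
Qed.
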